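(* Let $V=\{v_1,\dots,v_n\}$ be the cities of a symmetric TSP instance on the complete graph $K_n$ with nonnegative edge weights $w$. Let $I$ (white edges) and $X$ (excluded edges) be disjoint sets of edges, and let $g$ be a Hamiltonian cycle on $V$ that contains every edge of $I$ and no edge of $X$. Then the weight of the constrained 1-tree with respect to $(I,X)$ is at most the weight $w(g)=\sum_{e\in g}w(e)$.
   Context: The constrained 1-tree with respect to $(I,X)$ is built in two steps. (1) Constrained MST: run Prim's algorithm on the complete graph on $\{v_2,\dots,v_n\}$ with all edges of $X$ discarded, where any edge of $I$ crossing the current cut is given the highest priority (selected before any edge not in $I$) and the remaining candidate edges are ranked by weight. (2) Connect $v_1$ to this tree by two edges: every edge of $I$ incident with $v_1$ is selected regardless of cost, every edge of $X$ incident with $v_1$ is discarded, and the remaining edges incident with $v_1$ are selected in order of increasing weight until two edges incident with $v_1$ have been chosen. The constrained 1-tree is the union of the constrained MST and these two edges; its weight is the sum of its edge weights. In the paper's setting, $I$ and $X$ are the white and excluded edges of a Stem-and-Cycle configuration $c$ in an ejection chain, and $g$ is the goal tour toward which these constraints lead, which therefore contains all of $I$ and none of $X$. *)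

(* Defs.v *)
From mathcomp Require Import all_boot all_order all_algebra.
Set Implicit Arguments. Unset Strict Implicit. Unset Printing Implicit Defensive.
Import Order.TTheory GRing.Theory Num.Theory.
Local Open Scope ring_scope.

(* Cities: a finite type T; v1 : T is the distinguished city.
   Edges of K_n: 2-element subsets of T.  Edge sets: {set {set T}}. *)

Section TSP.
Variables (T : finType) (R : realDomainType).

Definition is_edge (e : {set T}) : bool := #|e| == 2%N.

Definition cycle_edges (s : seq T) : {set {set T}} :=
  [set [set x; next s x] | x in s].

Definition hamiltonian_cycle (g : {set {set T}}) : Prop :=
  exists s : seq T, [/\ uniq s, size s = #|T|, (3 <= #|T|)%N & g = cycle_edges s].

Definition weight_set (w : {set T} -> R) (g : {set {set T}}) : R :=
  \sum_(e in g) w e.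

Variables (w : {set T} -> R) (v1 : T) (I X : {set {set T}}).

(* Candidate edges of Prim's algorithm on K_n - v1 with X discarded,
   crossing the cut (C, complement) where C is the current tree's vertex set. *)
Definition crossing (C : {set T}) (f : {set T}) : bool :=
  [&& is_edge f, v1 \notin f, #|f :&: C| == 1%N & f \notin X].

Definition prim_step (C : {set T}) (e : {set T}) : bool :=
  crossing C e &&
  ((e \in I) ||
   [forall f : {set T}, crossing C f ==> (f \notin I) && (w e <= w f)]).

Fixpoint prim_valid (C : {set T}) (es : seq {set T}) : bool :=
  match es with
  | [::] => true
  | e :: es' => prim_step C e && prim_valid (C :|: e) es'
  end.

Definition tree_vertices (r : T) (es : seq {set T}) : {set T} :=
  r |: \bigcup_(e <- es) e.

(* es is the edge sequence (in selection order) output by a complete run of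
   the constrained Prim algorithm on {v2,...,vn}, started at root r. *)
Definition constrained_mst (r : T) (es : seq {set T}) : Prop :=
  [/\ r != v1, prim_valid [set r] es & tree_vertices r es = [set x | x != v1]].

(* S is the set of two edges joining v1 to the tree in step (2). *)
Definition v1_connection (S : {set {set T}}) : Prop :=
  [/\ #|S| = 2%N,
      (forall e, e \in S -> [&& is_edge e, v1 \in e & e \notin X]),
      (forall e, e \in I -> v1 \in e -> e \in S) &
      (forall e f, e \in S -> e \notin I ->
         is_edge f -> v1 \in f -> f \notin X -> f \notin I -> f \notin S ->
         w e <= w f)].

Definition constrained_one_tree (r : T) (es : seq {set T}) (S : {set {set T}}) : Prop :=
  constrained_mst r es /\ v1_connection S.

Definition one_tree_weight (es : seq {set T}) (S : {set {set T}}) : R :=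
  \sum_(e <- es) w e + \sum_(e in S) w e.

End TSP.

(* Main.v *)
Require Import Defs.
From mathcomp Require Import all_boot all_order all_algebra zify.
Set Implicit Arguments. Unset Strict Implicit. Unset Printing Implicit Defensive.
Import Order.TTheory GRing.Theory Num.Theory.
Local Open Scope ring_scope.


Section Aux.
Variable T : finType.
Implicit Types (E : {set {set T}}) (C : {set T}).

Definition adj E : rel T := fun x y => [set x; y] \in E.

Lemma adj_sym E : symmetric (adj E).
Proof. by move=> x y; rewrite /adj setUC. Qed.

Lemma path_avoid E c d x p : path (adj E) x p -> c \notin x :: p ->
  path (adj (E :\ [set c; d])) x p.
Proof.
elim: p x => //= y p IH x /andP[exy pp]; rewrite inE negb_or => /andP[cx cyp].
move: exy; rewrite IH // andbT /adj !inE => ->; rewrite andbT; apply/eqP => h.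
have : c \in [set x; y] by rewrite h set21.
rewrite !inE => /orP[] /eqP ce; first by rewrite ce eqxx in cx.
by move: cyp; rewrite ce inE eqxx.
Qed.

Lemma path_connect_sub E x p : path (adj E) x p -> connect (adj E) x (last x p).
Proof. by move=> pp; apply/connectP; exists p. Qed.

Lemma cross_path E C a p : path (adj E) a p -> uniq (a :: p) -> a \in C ->
  last a p \notin C ->
  exists c d, [/\ [set c; d] \in E, c \in C, d \notin C,
    connect (adj (E :\ [set c; d])) a c &
    connect (adj (E :\ [set c; d])) d (last a p)].
Proof.
elim: p a => [|x p IH] a /=; first by move=> _ _ ->.
move=> /andP[eax pp] /andP[anin up] aC lC.
have [xC|xnC] := boolP (x \in C).
  have [c [d [cdE cC dC h1 h2]]] := IH x pp up xC lC.
  exists c, d; split => //.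
  apply: connect_trans h1; apply: connect1.
  move: eax; rewrite /adj !inE => ->; rewrite andbT; apply/eqP => h.
  have : d \in [set a; x] by rewrite h set22.
  by rewrite !inE => /orP[] /eqP de; rewrite de ?aC ?xC in dC.
exists a, x; split => //.

by apply: path_connect_sub; apply: path_avoid.
Qed.
End Aux.


Section Aux2.
Variable T : finType.
Implicit Types (E : {set {set T}}) (C : {set T}).

Lemma adj_mono E E' x y : E \subset E' -> connect (adj E) x y -> connect (adj E') x y.
Proof.
move=> sub; apply: connect_sub => u v h; apply: connect1.
by rewrite /adj (subsetP sub).
Qed.

Lemma connect_symA E x y : connect (adj E) x y = connect (adj E) y x.
Proof. exact: (sym_connect_sym (@adj_sym _ E)). Qed.

Lemma set2_cross C c d : c \in C -> d \notin C -> #|[set c; d] :&: C| == 1%N.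
Proof.
move=> cC dC; have -> : [set c; d] :&: C = [set c].
  apply/setP => z; rewrite !inE; have [->|_] := eqVneq z c; first by rewrite cC.
  by case: eqVneq => [->|] //=; rewrite (negbTE dC).
by rewrite cards1.
Qed.

Lemma edge_split C e : is_edge e -> #|e :&: C| == 1%N ->
  exists a b, [/\ e = [set a; b], a \in C & b \notin C].
Proof.
move=> /cards2P [x [y [xy ->]]] h.
have [xC|xC] := boolP (x \in C); have [yC|yC] := boolP (y \in C).
- have: [set x; y] :&: C = [set x; y].
    by apply/setIidPl/subsetP => z; rewrite !inE => /orP[]/eqP->.
  by move=> ee; rewrite ee cards2 xy in h.
- by exists x, y.
- by exists y, x; rewrite setUC.
- have: [set x; y] :&: C = set0.
    apply/setP => z; rewrite !inE; apply/negP => /andP[/orP[]/eqP-> H].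
      by rewrite (negbTE xC) in H.
    by move: H; apply/negP.
  by move=> ee; rewrite ee cards0 in h.
Qed.
End Aux2.


Section Main.
Variables (T : finType) (R : realDomainType) (w : {set T} -> R)
  (v1 : T) (I X : {set {set T}}).
Implicit Types (E : {set {set T}}) (C : {set T}).

Definition Egood E :=
  [/\ (forall f, f \in E -> [&& is_edge f, v1 \notin f & f \notin X]),
      (forall f, f \in I -> v1 \notin f -> f \in E) &
      (forall x y, x != v1 -> y != v1 -> connect (adj E) x y)].

Lemma exch_step C e E : prim_step w v1 I X C e -> Egood E ->
  exists E1, [/\ Egood E1, weight_set w E1 <= weight_set w E, e \in E1 &
    forall f, f \in E -> f \subset C -> f \in E1].
Proof.
move=> /andP[cr pri] [Eed EI Econ].
have [eE|eE] := boolP (e \in E); first by exists E; split.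
move: (cr) => /and4P[ee v1e e1 eX].
have [a [b [ed aC bC]]] := edge_split ee e1.
have av : a != v1 by apply: contraNneq v1e => <-; rewrite ed set21.
have bv : b != v1 by apply: contraNneq v1e => <-; rewrite ed set22.
have /connectP [p0 pp0 lp0] := Econ _ _ av bv.
case: (shortenP pp0) lp0 => p pp up _ lp.
have bC' : last a p \notin C by rewrite -lp.
have [c [d [cdE cC dC h1 h2]]] := cross_path pp up aC bC'.
rewrite -lp in h2.
set f := [set c; d] in cdE h1 h2.
have /and3P [fe v1f fX] := Eed _ cdE.
have crf : crossing v1 X C f by rewrite /crossing fe v1f fX set2_cross.
have eI : e \notin I.
  by apply: contra eE => eI; apply: EI.
rewrite (negbTE eI) /= in pri.
have /andP [fI wef] := implyP (forallP pri f) crf.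
have fne : f != e by apply: contraNneq eE => <-.
exists (e |: (E :\ f)); split.
- split.
  + move=> g; rewrite !inE => /orP[/eqP->|/andP[_ /Eed]] //.
    by rewrite ee v1e eX.
  + move=> g gI gv; rewrite !inE EI // andbT orbC.
    by apply/orP; left; apply: contraNneq fI => <-.
  + move=> x y xv yv; apply: (connect_sub _ (Econ _ _ xv yv)) => u v uv.
    have sub : E :\ f \subset e |: (E :\ f) by apply/subsetP => z zz; rewrite setU1r.
    have [uvf|uvf] := eqVneq [set u; v] f; last first.
      by apply: connect1; move: uv; rewrite /adj !inE uvf => ->; rewrite orbT.
    have cd : connect (adj (e |: (E :\ f))) c d.
      have ca : connect (adj (e |: (E :\ f))) c a.
        by rewrite connect_symA; exact: adj_mono sub h1.
      have ab : connect (adj (e |: (E :\ f))) a b.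
        by apply: connect1; rewrite /adj -ed setU11.
      have bd : connect (adj (e |: (E :\ f))) b d.
        by rewrite connect_symA; exact: adj_mono sub h2.
      exact: connect_trans ca (connect_trans ab bd).
    have : u \in f by rewrite -uvf set21.
    have : v \in f by rewrite -uvf set22.
    rewrite !inE => /orP[]/eqP-> /orP[]/eqP->; rewrite ?connect0 //.
    by rewrite connect_symA.
- rewrite /weight_set big_setU1 /=; last by rewrite !inE negb_and eE orbT.
  rewrite [X in _ <= X](big_setD1 _ cdE) /= lerD2r //.
- exact: setU11.
- move=> g gE gC; rewrite !inE gE andbT orbC; apply/orP; left.
  apply: contraNneq dC => gf; by apply: (subsetP gC); rewrite gf set22.
Qed.

Lemma prim_exch C es E : prim_valid w v1 I X C es -> Egood E ->
  exists E', [/\ Egood E', weight_set w E' <= weight_set w E,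
    all (fun e => e \in E') es & forall f, f \in E -> f \subset C -> f \in E'].
Proof.
elim: es C E => [|e es IH] C E /=; first by move=> _ g; exists E; split.
move=> /andP[st pv] g.
have [E1 [g1 w1 eE1 k1]] := exch_step st g.
have [E2 [g2 w2 a2 k2]] := IH _ _ pv g1.
exists E2; split => //.
- exact: le_trans w2 w1.
- rewrite a2 andbT; apply: k2 => //; exact: subsetUr.
- move=> f fE fC; apply: k2; first exact: k1.
  by apply: subset_trans fC (subsetUl _ _).
Qed.

Lemma cross_nsub C e : crossing v1 X C e -> ~~ (e \subset C).
Proof.
move=> /and4P[ee _ e1 _]; apply/negP => /setIidPl h.
by rewrite h (eqP ee) in e1.
Qed.

Lemma prim_uniq C es : prim_valid w v1 I X C es ->
  uniq es && all (fun e : {set T} => ~~ (e \subset C)) es.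
Proof.
elim: es C => [|e es IH] C //= /andP[/andP[cr _] pv].
have /andP[u a] := IH _ pv.
rewrite u cross_nsub //= andbT; apply/andP; split.
  apply/negP => ees; move/allP: a => /(_ _ ees); rewrite subsetUr //.
apply/allP => f fes; move/allP: a => /(_ _ fes); apply: contra => fC.
by apply: subset_trans fC (subsetUl _ _).
Qed.

Lemma sum_le (es : seq {set T}) E : uniq es -> all (fun e => e \in E) es ->
  (forall f, f \in E -> 0 <= w f) -> \sum_(e <- es) w e <= weight_set w E.
Proof.
move=> u a pos; rewrite big_uniq // /weight_set [X in _ <= X](bigID (fun i => i \in es)) /=.
rewrite -[X in X <= _]addr0.
apply: lerD; last by apply: sumr_ge0 => i /andP[/pos].
rewrite le_eqVlt; apply/orP; left; apply/eqP; apply: eq_bigl => i /=.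
by case ies: (i \in es); rewrite ?andbT ?andbF //; move/allP: a => /(_ _ ies) ->.
Qed.
End Main.


Section Ham.
Variables (T : finType) (v1 : T).

Lemma all_in (s : seq T) : uniq s -> size s = #|T| -> forall x, x \in s.
Proof.
move=> u sz x; have h : #|s| = #|T| by rewrite (card_uniqP u).
have := subset_cardP h; move=> /(_ (subset_predT _)) => /= E.
by move: (E x); rewrite !inE.
Qed.

Lemma ham_norm g : hamiltonian_cycle g -> exists h q,
  [/\ uniq (v1 :: h :: q), q != [::], (forall x, x \in v1 :: h :: q) &
      g = [set [set x; next (v1 :: h :: q) x] | x in v1 :: h :: q]].
Proof.
move=> [s [u sz t3 ->]].
have all := all_in u sz.
case: (rot_to (all v1)) => i s' rs.
have u' : uniq (v1 :: s') by rewrite -rs rot_uniq.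
have sz' : size (v1 :: s') = #|T| by rewrite -rs size_rot.
case: s' rs u' sz' => [|h [|q0 q]] rs u' sz'; first by rewrite -sz' in t3.
  by rewrite -sz' in t3.
exists h, (q0 :: q); split => //.
  by move=> x; rewrite -rs mem_rot.
rewrite /cycle_edges -rs.
have -> : [set [set x; next (rot i s) x] | x in rot i s] =
          [set [set x; next s x] | x in rot i s].
  by apply: eq_imset => x; rewrite next_rot.
apply/setP => e; apply/imsetP/imsetP => -[x xs ->]; exists x => //.
  by rewrite mem_rot.
Qed.
End Ham.


Section Ham2.
Variables (T : finType) (v1 : T).

Lemma next_neq_gen (f : T -> T) x p z : path (frel f) x (rcons p z) ->
  uniq (x :: p) -> z != last x p -> forall y, y \in x :: p -> f y != y.
Proof.
elim: p x => [|y' p IH] x /=.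
  by move=> /andP[/eqP fx _] _ zx y; rewrite inE => /eqP ->; rewrite fx.
move=> /andP[/eqP fx pp] /andP[xn up] zl y; rewrite inE => /orP[/eqP ->|yin].
  by rewrite fx; apply: contraNneq xn => ->; rewrite inE eqxx.
exact: (IH y' pp up zl y yin).
Qed.

Lemma path_adj (f : T -> T) (G : {set {set T}}) x p :
  (forall y, y \in x :: p -> [set y; f y] \in G) -> v1 \notin x :: p ->
  path (frel f) x p -> path (adj [set e in G | v1 \notin e]) x p.
Proof.
elim: p x => [|y p IH] x //= hG; rewrite !inE !negb_or => /and3P[vx vy vp].
move=> /andP[/eqP fx pp].
have h1 : v1 \notin y :: p by rewrite inE negb_or vy.
have h2 : forall z, z \in y :: p -> [set z; f z] \in G.
  by move=> z zin; apply: hG; rewrite inE zin orbT.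
rewrite (IH y h2 h1 pp) andbT /adj.
rewrite in_set -fx hG ?inE ?eqxx // fx.
by rewrite negb_or vx vy.
Qed.

Lemma last_in (h : T) q : q != [::] -> last h q \in q.
Proof. by case: q => // q0 q' _ /=; exact: mem_last. Qed.

Lemma ham_facts g : hamiltonian_cycle g ->
  [/\ forall e, e \in g -> is_edge e,
      forall x y, x != v1 -> y != v1 -> connect (adj [set e in g | v1 \notin e]) x y,
      #|[set e in g | v1 \in e]| = 2%N & exists r, r != v1].
Proof.
move=> /(ham_norm v1) [h [q [u qn all ->]]].
set s0 := v1 :: h :: q; set nx := next s0.
have cyc : fcycle nx s0 := cycle_next u.
move: (cyc); rewrite /= rcons_path => /and3P[/eqP nv1 pq /eqP nl].
move: (u); rewrite /s0 /= inE negb_or => /andP[/andP[vh vq] /andP[hq uq]].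
set l := last h q in nl.
have lin : l \in h :: q := mem_last h q.
have lv : l != v1 by apply: contraTneq lin => ->; rewrite inE negb_or vh.
have hl : h != l.
  have lq : l \in q by apply: last_in.
  by apply: contraNneq hq => ->.
have hv : h != v1 by rewrite eq_sym.
have memg : forall y, y \in s0 -> [set y; nx y] \in [set [set x; nx x] | x in s0].
  by move=> y ys; apply: imset_f.
split.
- move=> e /imsetP [x xs ->]; rewrite /is_edge cards2 eq_sym.
  have nn := @next_neq_gen nx v1 (h :: q) v1 cyc u.
  have lv' : v1 != last v1 (h :: q) by rewrite /= -/l eq_sym.
  by have := nn lv' x xs; rewrite eq_sym => ->.
- have pa : path (adj [set e in [set [set x; nx x] | x in s0] | v1 \notin e]) h q.
    apply: path_adj pq.
      by move=> y yin; apply: memg; rewrite inE yin orbT.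
    by rewrite inE negb_or vh.
  have ch : forall x, x != v1 -> connect (adj [set e in [set [set x; nx x] | x in s0] | v1 \notin e]) h x.
    move=> x xv; apply: (path_connect pa).
    by move: (all x); rewrite /s0 inE (negbTE xv).
  move=> x y xv yv; apply: connect_trans (ch _ yv).
  by rewrite connect_symA; apply: ch.
- have -> : [set e in [set [set x; nx x] | x in s0] | v1 \in e] =
            [set [set v1; h]; [set l; v1]].
    apply/setP => e; rewrite !inE; apply/andP/orP.
      move=> [/imsetP [x xs ->]]; rewrite !inE => /orP[/eqP <-|/eqP nxv].
        by left; rewrite nv1.
      right; have : nx x = nx l by rewrite nl.
      move=> e'; have xl : x = l := can_inj (prev_next u) e'.
      by rewrite xl nl.
    move=> [/eqP->|/eqP->]; split; rewrite ?inE ?eqxx ?orbT //.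
      by rewrite -nv1; apply: memg; rewrite inE eqxx.
    by rewrite -[X in [set _; X]]nl; apply: memg; rewrite /s0 inE lin orbT.
  rewrite cards2; suff -> : [set v1; h] != [set l; v1] by [].
  apply/eqP => e.
  have : h \in [set l; v1] by rewrite -e set22.
  by rewrite !inE (negbTE hv) orbF (negbTE hl).
- by exists h.
Qed.
End Ham2.


Section SPart.
Variables (U : finType) (R : realDomainType) (w : U -> R).

Lemma min_exists (D : {set U}) x0 : x0 \in D ->
  exists2 x, x \in D & forall y, y \in D -> w x <= w y.
Proof.
move=> x0D; case: (@arg_minP _ R U x0 (mem D) w x0D) => i iD imin.
by exists i.
Qed.

Lemma greedy (A : {set U}) k : (k <= #|A|)%N -> exists B : {set U}, [/\ B \subset A, #|B| = k &
  forall b f : U, b \in B -> f \in A -> f \notin B -> w b <= w f].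
Proof.
elim: k => [|k IH] hk.
  by exists set0; split => //; [apply: sub0set|rewrite cards0|move=> b f; rewrite inE].
have [B [BA cB mB]] := IH (ltnW hk).
have : (0 < #|A :\: B|)%N.
  by rewrite cardsD (setIidPr BA) cB subn_gt0.
move=> /card_gt0P [x0 x0in].
have [f0 f0in f0min] := min_exists x0in.
move: (f0in); rewrite inE => /andP[f0B f0A].
exists (f0 |: B); split.
- by rewrite subUset sub1set f0A BA.
- by rewrite cardsU1 f0B cB.
- move=> b f; rewrite !inE negb_or => /orP[/eqP->|bB] fA /andP[ff0 fB].
    by apply: f0min; rewrite inE fB fA.
  exact: mB.
Qed.

Lemma sum_swap (A B : {set U}) : #|A| = #|B| ->
  (forall a b : U, a \in A -> b \in B -> w a <= w b) ->
  \sum_(a in A) w a <= \sum_(b in B) w b.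
Proof.
move=> cAB h; have [n cA] : exists n, #|A| = n by eexists.
elim: n A B cA cAB h => [|n IH] A B cA cB h.
  move: (cB); rewrite cA => cB'.
  move/eqP: cA; rewrite cards_eq0 => /eqP->.
  move/eqP: cB'; rewrite eq_sym cards_eq0 => /eqP->.
  by rewrite !big_set0.
have /card_gt0P [a aA] : (0 < #|A|)%N by rewrite cA.
have /card_gt0P [b bB] : (0 < #|B|)%N by rewrite -cB cA.
rewrite (big_setD1 _ aA) (big_setD1 _ bB) /=; apply: lerD; first exact: h.
apply: IH.
- by move: cA; rewrite (cardsD1 a A) aA => -[].
- by move: cB; rewrite (cardsD1 a A) (cardsD1 b B) aA bB => -[].
- by move=> x y; rewrite !inE => /andP[_ xA] /andP[_ yB]; apply: h.
Qed.
End SPart.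


Section S2.
Variables (T : finType) (R : realDomainType) (w : {set T} -> R)
  (v1 : T) (I X : {set {set T}}).

Definition Kset := [set f : {set T} | [&& is_edge f, v1 \in f & f \notin X]].
Definition I1 := [set f in I | v1 \in f].

Lemma S_exists (G1 : {set {set T}}) : {subset I <= @is_edge T} -> [disjoint I & X] ->
  G1 \subset Kset -> I1 \subset G1 -> #|G1| = 2%N ->
  exists S, v1_connection w v1 I X S.
Proof.
move=> Ie dIX GK IG cG.
have cI1 : (#|I1| <= 2)%N by rewrite -cG subset_leq_card.
have hk : (2 - #|I1| <= #|Kset :\: I1|)%N.
  have : (#|G1 :\: I1| <= #|Kset :\: I1|)%N by apply/subset_leq_card/setSD.
  by rewrite cardsD (setIidPr IG) cG.
have [B [BA cB mB]] := greedy w hk.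
have dis : I1 :&: B = set0.
  apply/setP => z; rewrite !inE; apply/negP => /andP[/andP[zI zv] zB].
  by move: (subsetP BA _ zB); rewrite !inE zI zv.
exists (I1 :|: B); split.
- by rewrite cardsU dis cards0 cB subn0; lia.
- move=> e; rewrite inE => /orP[|eB].
    rewrite !inE => /andP[eI ->]; have ie : is_edge e := Ie _ eI; rewrite ie /=.
    by rewrite (disjointFr dIX eI).
  by move: (subsetP BA _ eB); rewrite !inE => /andP[_ ->].
- by move=> e eI ev; rewrite !inE eI ev.
- move=> e f; rewrite inE => /orP[eI1|eB] eI.
    by move: eI1; rewrite inE (negbTE eI).
  move=> fe fv fX fI; rewrite inE negb_or => /andP[fI1 fB].
  apply: mB => //; rewrite !inE fe fv fX andbT.
  by rewrite fI.
Qed.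

Lemma S_bound (G1 S : {set {set T}}) : v1_connection w v1 I X S ->
  G1 \subset Kset -> I1 \subset G1 -> #|G1| = 2%N ->
  \sum_(e in S) w e <= \sum_(e in G1) w e.
Proof.
move=> [cS Sok SI Smin] GK IG cG.
rewrite (big_setID (A := S) G1) (big_setID (A := G1) S) setIC /=.
apply: lerD => //.
apply: sum_swap.
  by rewrite !cardsD cS cG setIC.
move=> a b; rewrite !inE => /andP[aG aS] /andP[bS bG].
have aI : a \notin I.
  apply: contra aG => aI; apply: (subsetP IG); rewrite inE aI.
  by case/and3P: (Sok _ aS).
move: (subsetP GK _ bG); rewrite inE => /and3P[be bv bX].
apply: Smin => //.
by apply: contra bS => bI; apply: SI.
Qed.
End S2.


Section PE.
Variables (T : finType) (R : realDomainType) (w : {set T} -> R)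
  (v1 : T) (I X : {set {set T}}).

Lemma prim_exists E r (n : nat) : Egood v1 I X E -> forall C : {set T}, r \in C ->
  C \subset [set x | x != v1] -> (#|[set x | x != v1] :\: C| <= n)%N ->
  exists es, prim_valid w v1 I X C es /\
    C :|: \bigcup_(e <- es) e = [set x | x != v1].
Proof.
move=> [Eed EI Econ]; elim: n => [|n IH] C rC CV hn.
  exists [::]; split => //; rewrite big_nil setU0; apply/eqP; rewrite eqEsubset CV /=.
  by move: hn; rewrite leqn0 cards_eq0 setD_eq0.
have [sub|nsub] := boolP ([set x | x != v1] \subset C).
  by exists [::]; split => //; rewrite big_nil setU0; apply/eqP; rewrite eqEsubset CV.
have [b bV bC] : exists2 b, b \in [set x | x != v1] & b \notin C.
  by move/subsetPn: nsub => [b ? ?]; exists b.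
have rv : r != v1 by move: (subsetP CV _ rC); rewrite inE.
have bv : b != v1 by move: bV; rewrite inE.
have /connectP [p0 pp0 lp0] := Econ _ _ rv bv.
case: (shortenP pp0) lp0 => p pp up _ lp.
have bC' : last r p \notin C by rewrite -lp.
have [c [d [cdE cC dC _ _]]] := cross_path pp up rC bC'.
have /and3P [fe v1f fX] := Eed _ cdE.
have crf : crossing v1 X C [set c; d] by rewrite /crossing fe v1f fX set2_cross.
have [e st] : exists e, prim_step w v1 I X C e.
  have [/existsP [e /andP[ce eI]]|none] := boolP [exists e, crossing v1 X C e && (e \in I)].
    by exists e; rewrite /prim_step ce eI.
  have cin : [set c; d] \in [set f | crossing v1 X C f] by rewrite inE.
  have [e ein emin] := min_exists w cin.
  exists e; rewrite /prim_step; move: ein; rewrite inE => -> /=.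
  apply/orP; right; apply/forallP => f; apply/implyP => cf.
  rewrite emin ?inE // andbT; apply: contraNN none => fI.
  by apply/existsP; exists f; rewrite cf fI.
move: (st) => /andP[cre _]; move: (cre) => /and4P[ee v1e e1 eX].
have [a [b' [ed aC bC2]]] := edge_split ee e1.
have eV : e \subset [set x | x != v1].
  apply/subsetP => z ze; rewrite inE; apply/eqP => zv; by move: v1e; rewrite -zv ze.
have b'e : b' \in e by rewrite ed set22.
have rC' : r \in C :|: e by rewrite inE rC.
have CV' : C :|: e \subset [set x | x != v1] by rewrite subUset CV eV.
have hn' : (#|[set x | x != v1] :\: (C :|: e)| <= n)%N.
  have b'in : b' \in [set x | x != v1] :\: C by rewrite inE bC2 (subsetP eV).
  have sb : [set x | x != v1] :\: (C :|: e) \subset ([set x | x != v1] :\: C) :\ b'.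
    apply/subsetP => z; rewrite !inE negb_or => /andP[/andP[zC ze] zv].
    rewrite zC zv !andbT; apply/eqP => zb; by move: ze; rewrite zb b'e.
  have h1 := subset_leq_card sb.
  have h2 : #|[set x | x != v1] :\: C| = (#|([set x | x != v1] :\: C) :\ b'|).+1.
    by rewrite (cardsD1 b' ([set x | x != v1] :\: C)) b'in.
  by apply: leq_trans h1 _; rewrite -ltnS -h2.
have [es [pv un]] := IH (C :|: e) rC' CV' hn'.
exists (e :: es); split; first by rewrite /= st.
by rewrite big_cons setUA.
Qed.
End PE.

Unset Implicit Arguments. Set Strict Implicit.

Theorem theorem1 (T : finType) (R : realDomainType) (w : {set T} -> R)
  (v1 : T) (I X g : {set {set T}}) :
  (forall e : {set T}, is_edge e -> 0 <= w e) ->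
  {subset I <= @is_edge T} -> {subset X <= @is_edge T} ->
  [disjoint I & X] ->
  hamiltonian_cycle g ->
  I \subset g -> [disjoint g & X] ->
  (exists r es S, constrained_one_tree w v1 I X r es S) /\
  (forall r es S, constrained_one_tree w v1 I X r es S ->
     one_tree_weight w es S <= weight_set w g).
Proof.
move=> pos Ie Xe dIX hc Ig dgX.
have [ge conn cG1 [r0 r0v]] := ham_facts v1 hc.
set P := [set e in g | v1 \notin e].
set G1 := [set e in g | v1 \in e].
have gP : Egood v1 I X P.
  split.
  - move=> f; rewrite inE => /andP[fg ->]; rewrite ge //=.
    by rewrite (disjointFr dgX fg).
  - by move=> f fI fv; rewrite inE fv (subsetP Ig _ fI).
  - exact: conn.
have GK : G1 \subset Kset v1 X.
  apply/subsetP => f; rewrite !inE => /andP[fg ->]; rewrite ge //=.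
  by rewrite (disjointFr dgX fg).
have IG : I1 v1 I \subset G1.
  by apply/subsetP => f; rewrite !inE => /andP[fI ->]; rewrite (subsetP Ig _ fI).
split.
  have r0C : r0 \in [set r0] by rewrite inE.
  have CV : [set r0] \subset [set x | x != v1] by rewrite sub1set inE.
  have [es [pv un]] := @prim_exists _ _ w v1 I X P r0 _ gP _ r0C CV (leqnn _).
  have [S hS] := S_exists w Ie dIX GK IG cG1.
  by exists r0, es, S; split => //; split.
move=> r es S [[rv pv tv] hS].
have [E' [gE' wE' aE' _]] := prim_exch pv gP.
have /andP [ues _] := prim_uniq pv.
have h1 : \sum_(e <- es) w e <= weight_set w E'.
  apply: sum_le => // f fE; apply: pos.
  by case: gE' => /(_ _ fE) /and3P[].
have h2 := S_bound hS GK IG cG1.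
rewrite /one_tree_weight /weight_set [X in _ <= X](bigID (fun e : {set T} => v1 \in e)) /= [X in _ <= X]addrC.
apply: lerD.
  apply: le_trans h1 (le_trans wE' _).
  by rewrite /weight_set le_eqVlt; apply/orP; left; apply/eqP; apply: eq_bigl => e; rewrite inE andbC.
apply: (le_trans h2).
by rewrite le_eqVlt; apply/orP; left; apply/eqP; apply: eq_bigl => e; rewrite inE andbC.
Qed.
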